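(* Let $F$ be a field. Every almost identity PC-map $\mathrm{UT}(\infty,F)\to\mathrm{UT}(\infty,F)$ is the identity map.
   Context: $\mathrm{UT}(\infty,F)$ is the group of all $\mathbb N\times\mathbb N$ matrices over $F$ with $1$ on the diagonal and $0$ below it. $e$ is the identity, $e_{ij}$ the matrix unit, $t_{ij}(\alpha)=e+\alpha e_{ij}$ ($i<j$). $[x,y]=xyx^{-1}y^{-1}$. A PC-map is a bijection $\varphi$ of the group with $\varphi([x,y])=[\varphi(x),\varphi(y)]$ for all $x,y$; it is almost identity if $\varphi(t_{ij}(\alpha))=t_{ij}(\alpha)$ for all $i<j$, $\alpha\in F$. *)

(* Defs.v *)
From HB Require Import structures.
From mathcomp Require Import all_boot all_order all_algebra.
Set Implicit Arguments. Unset Strict Implicit. Unset Printing Implicit Defensive.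
Import GRing.Theory.
Local Open Scope ring_scope.

(* N x N matrices over F, indexed from 0. *)
Definition nmat (F : fieldType) := nat -> nat -> F.

Section UT.
Variable F : fieldType.

Definition isUT (A : nmat F) : Prop :=
  forall i j : nat, (A i i = 1) /\ ((j < i)%N -> A i j = 0).

Definition eUT : nmat F := fun i j => (i == j)%:R.

Definition munit (i j : nat) : nmat F := fun k l => ((k == i) && (l == j))%:R.
Definition tUT (i j : nat) (a : F) : nmat F := fun k l => eUT k l + a * munit i j k l.

(* product; for upper triangular matrices the entry (i,j) sum
   \sum_k A i k B k j only involves k <= j, so it is a finite sum *)
Definition mulUT (A B : nmat F) : nmat F :=
  fun i j => \sum_(k < j.+1) A i k * B k j.

(* inverse of a unitriangular matrix, computed row by row from B A = e:
   B i j = 0 (j < i), B i i = 1, B i j = - \sum_(i <= k < j) B i k * A k j *)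
Fixpoint invrow (A : nmat F) (i n : nat) : seq F :=
  match n with
  | 0 => [::]
  | n'.+1 =>
      let s := invrow A i n' in
      rcons s (if (n' < i)%N then 0
               else if n' == i then 1
               else - \sum_(i <= k < n') s`_k * A k n')
  end.

Definition invUT (A : nmat F) : nmat F := fun i j => (invrow A i j.+1)`_j.

Definition commUT (x y : nmat F) : nmat F :=
  mulUT (mulUT (mulUT x y) (invUT x)) (invUT y).

Definition PCmap (phi : nmat F -> nmat F) : Prop :=
  [/\ (forall x, isUT x -> isUT (phi x)),
      (forall x y, isUT x -> isUT y -> phi x = phi y -> x = y),
      (forall y, isUT y -> exists2 x, isUT x & phi x = y)
    & (forall x y, isUT x -> isUT y -> phi (commUT x y) = commUT (phi x) (phi y))].

Definition almost_identity (phi : nmat F -> nmat F) : Prop :=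
  forall (i j : nat) (a : F), (i < j)%N -> phi (tUT i j a) = tUT i j a.

End UT.

(* Main.v *)
Require Import Defs.
From HB Require Import structures.
From mathcomp Require Import all_boot all_order all_algebra.
From Stdlib Require Import FunctionalExtensionality.
From mathcomp Require Import ring zify.
Set Implicit Arguments. Unset Strict Implicit. Unset Printing Implicit Defensive.
Import GRing.Theory.
Local Open Scope ring_scope.



Lemma sum_delta (F : fieldType) (N c : nat) (G : nat -> F) :
  \sum_(k < N) (((k : nat) == c)%:R * G k) = if (c < N)%N then G c else 0.
Proof.
case: ltnP => Hc.
  rewrite (bigD1 (Ordinal Hc)) //= eqxx mul1r big1 ?addr0 // => k hk.
  have -> : (nat_of_ord k == c) = false.
    apply/negbTE; apply: contra hk => /eqP h; apply/eqP/val_inj => //.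
  by rewrite mul0r.
rewrite big1 // => k _.
have -> : (nat_of_ord k == c) = false.
  by apply/negbTE; rewrite neq_ltn (leq_trans (ltn_ord k) Hc).
by rewrite mul0r.
Qed.

Lemma sum_delta_r (F : fieldType) (N c : nat) (G : nat -> F) :
  \sum_(k < N) (G k * ((k : nat) == c)%:R) = if (c < N)%N then G c else 0.
Proof. rewrite -sum_delta; apply: eq_bigr => k _; exact: mulrC. Qed.

Lemma mulE (F : fieldType) (A B : nmat F) p r N :
  isUT B -> (r < N)%N -> mulUT A B p r = \sum_(k < N) A p k * B k r.
Proof.
move=> hB hr; rewrite /mulUT (big_ord_widen N (fun k => A p k * B k r) hr).
rewrite big_mkcond; apply: eq_bigr => k _; case: ifP => // /negbT.
by rewrite -leqNgt => hk; rewrite (proj2 (hB k r) hk) mulr0.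
Qed.

Lemma eUT_UT (F : fieldType) : isUT (eUT F).
Proof. move=> i j; rewrite /eUT eqxx; split=> // h; by rewrite gtn_eqF. Qed.

Lemma mulUT_UT (F : fieldType) (A B : nmat F) : isUT A -> isUT B -> isUT (mulUT A B).
Proof.
move=> hA hB i j; split.
  rewrite /mulUT big_ord_recr /= (proj1 (hA i i)) (proj1 (hB i i)) mulr1 big1 ?add0r //.
  by move=> k _; rewrite (proj2 (hA i k) (ltn_ord k)) mul0r.
move=> hji; rewrite /mulUT big1 // => k _.
by rewrite (proj2 (hA i k) (leq_trans (ltn_ord k) hji)) mul0r.
Qed.

Lemma mulA_UT (F : fieldType) (A B C : nmat F) : isUT B -> isUT C ->
  mulUT (mulUT A B) C = mulUT A (mulUT B C).
Proof.
move=> hB hC; apply: functional_extensionality => p.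
apply: functional_extensionality => r.
rewrite (mulE _ _ hC (ltnSn r)) (mulE _ _ (mulUT_UT hB hC) (ltnSn r)).
under eq_bigr => k _ do rewrite (mulE _ _ hB (ltn_ord k)) mulr_suml.
rewrite exchange_big /=; apply: eq_bigr => m _.
rewrite (mulE _ _ hC (ltnSn r)) mulr_sumr; apply: eq_bigr => k _; by rewrite mulrA.
Qed.



Lemma size_invrow (F : fieldType) (A : nmat F) i n : size (invrow A i n) = n.
Proof. by elim: n => //= n IH; rewrite size_rcons IH. Qed.

Lemma nth_invrow (F : fieldType) (A : nmat F) i n j : (j < n)%N ->
  (invrow A i n)`_j = (invrow A i j.+1)`_j.
Proof.
elim: n => // n IH; rewrite ltnS leq_eqVlt => /orP [/eqP -> //| hj].
by rewrite /= nth_rcons size_invrow hj IH.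
Qed.

Lemma invUT_eq (F : fieldType) (A : nmat F) i j :
  invUT A i j = if (j < i)%N then 0 else if j == i then 1
                else - \sum_(i <= k < j) invUT A i k * A k j.
Proof.
rewrite /invUT /= nth_rcons size_invrow ltnn eqxx.
case: ifP => // _; case: ifP => // _; congr (- _).
apply: eq_big_nat => k /andP [_ hk]; by rewrite nth_invrow.
Qed.

Lemma invUT_UT (F : fieldType) (A : nmat F) : isUT (invUT A).
Proof.
move=> i j; split; first by rewrite invUT_eq ltnn eqxx.
by move=> h; rewrite invUT_eq h.
Qed.

Lemma mulVUT (F : fieldType) (A : nmat F) : isUT A -> mulUT (invUT A) A = eUT F.
Proof.
move=> hA; apply: functional_extensionality => i.
apply: functional_extensionality => j.
rewrite /mulUT /eUT.
case: (ltngtP j i) => hij.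
- rewrite big1 ?(gtn_eqF hij) // => k _.
  by rewrite invUT_eq (leq_trans (ltn_ord k) hij) mul0r.
- rewrite big_ord_recr /= (proj1 (hA j j)) mulr1.
  rewrite [invUT A i j]invUT_eq ltnNge (ltnW hij) /= ?(gtn_eqF hij) ?(ltn_eqF hij) /=.
  rewrite -(big_mkord xpredT (fun k => invUT A i k * A k j)).
  rewrite (big_cat_nat (leq0n i) (ltnW hij)) /= big1_seq ?add0r ?addrN //.
  move=> k; rewrite mem_index_iota /= => hk.
  by rewrite invUT_eq hk mul0r.
- subst j; rewrite big_ord_recr /= big1 ?add0r ?eqxx.
    by rewrite invUT_eq ltnn eqxx (proj1 (hA i i)) mulr1.
  by move=> k _; rewrite invUT_eq ltn_ord mul0r.
Qed.

Lemma mul1UT (F : fieldType) (A : nmat F) : isUT A -> mulUT (eUT F) A = A.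
Proof.
move=> hA; apply: functional_extensionality => i.
apply: functional_extensionality => j.
rewrite /mulUT /eUT.
under eq_bigr => k _ do rewrite eq_sym.
rewrite (sum_delta _ _ (fun k => A k j)) ltnS; case: leqP => // h; by rewrite (proj2 (hA i j) h).
Qed.

Lemma mulUT1 (F : fieldType) (A : nmat F) : mulUT A (eUT F) = A.
Proof.
apply: functional_extensionality => i.
apply: functional_extensionality => j.
by rewrite /mulUT /eUT (sum_delta_r _ _ (fun k => A i k)) ltnSn.
Qed.

Lemma mulUTV (F : fieldType) (A : nmat F) : isUT A -> mulUT A (invUT A) = eUT F.
Proof.
move=> hA; have hC := mulVUT (invUT_UT A).
have e1 : invUT (invUT A) = A.
  transitivity (mulUT (invUT (invUT A)) (mulUT (invUT A) A)).
    by rewrite mulVUT // mulUT1.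
  rewrite -mulA_UT; [|exact: invUT_UT|exact: hA].
  by rewrite hC mul1UT.
by rewrite -{1}e1.
Qed.

Lemma invUT_uniq (F : fieldType) (A X : nmat F) : isUT A -> isUT X ->
  mulUT X A = eUT F -> X = invUT A.
Proof.
move=> hA hX h.
transitivity (mulUT X (mulUT A (invUT A))); first by rewrite mulUTV // mulUT1.
rewrite -mulA_UT; [|exact: hA|exact: invUT_UT].
by rewrite h mul1UT //; exact: invUT_UT.
Qed.

Lemma invUTK (F : fieldType) (A : nmat F) : isUT A -> invUT (invUT A) = A.
Proof. move=> hA; symmetry; apply: invUT_uniq => //; [exact: invUT_UT| exact: mulUTV]. Qed.

Lemma commUT_UT (F : fieldType) (x y : nmat F) : isUT x -> isUT y -> isUT (commUT x y).
Proof. move=> hx hy; rewrite /commUT; by do !apply: mulUT_UT => //; exact: invUT_UT. Qed.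

Lemma commUTxx (F : fieldType) (x : nmat F) : isUT x -> commUT x x = eUT F.
Proof.
move=> hx; rewrite /commUT [mulUT (mulUT x x) _]mulA_UT; [|exact: hx|exact: invUT_UT].
by rewrite mulUTV // mulUT1 mulUTV.
Qed.



Lemma sum_delta_UT (F : fieldType) (B : nmat F) q r : isUT B ->
  \sum_(k < r.+1) ((k : nat) == q)%:R * B k r = B q r.
Proof.
move=> hB; rewrite (sum_delta _ _ (fun k => B k r)) ltnS.
by case: leqP => // h; rewrite (proj2 (hB q r) h).
Qed.

Lemma natb_and (F : fieldType) (b c : bool) : ((b && c)%:R : F) = b%:R * c%:R.
Proof. by case: b; case: c; rewrite ?mulr1 ?mulr0. Qed.

Lemma tUT_ent (F : fieldType) i q (a : F) p r :
  tUT i q a p r = (p == r)%:R + a * ((p == i)%:R * (r == q)%:R).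
Proof. by rewrite /tUT /eUT /munit natb_and. Qed.

Lemma tUT_UT (F : fieldType) i q (a : F) : (i < q)%N -> isUT (tUT i q a).
Proof.
move=> hiq k l; rewrite !tUT_ent eqxx; split.
  case: (k =P i) => [->|_]; last by rewrite mul0r mulr0 addr0.
  by rewrite (ltn_eqF hiq) mulr0 mulr0 addr0.
move=> hlk; rewrite (gtn_eqF hlk) add0r.
case: (k =P i) => [ki|_]; last by rewrite mul0r mulr0.
case: (l =P q) => [lq|_]; last by rewrite mulr0 mulr0.
by exfalso; move: hlk hiq; rewrite ki lq => h1 h2; move: (ltn_trans h1 h2); rewrite ltnn.
Qed.

Lemma mul_t_r (F : fieldType) (A : nmat F) i q (a : F) p r : (i < q)%N ->
  mulUT A (tUT i q a) p r = A p r + a * A p i * (r == q)%:R.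
Proof.
move=> hiq; rewrite /mulUT.
under eq_bigr => k _ do rewrite tUT_ent mulrDr.
rewrite big_split /= (sum_delta_r _ _ (fun k => A p k)) ltnSn; congr (_ + _).
case: (r =P q) => [->|_].
  have := sum_delta_r q.+1 i (fun k => a * A p k); rewrite ltnS (ltnW hiq) /= => <-.
  rewrite mulr1.
  by apply: eq_bigr => k _; rewrite mulr1 mulrA [A p k * a]mulrC -mulrA mulrC.
rewrite mulr0 big1 // => k _; by rewrite !mulr0.
Qed.

Lemma inv_tUT (F : fieldType) i q (a : F) : (i < q)%N ->
  invUT (tUT i q a) = tUT i q (- a).
Proof.
move=> hiq; symmetry; apply: invUT_uniq; try exact: tUT_UT.
apply: functional_extensionality => p; apply: functional_extensionality => r.
rewrite mul_t_r // !tUT_ent (ltn_eqF hiq) /eUT.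
by case: (p == i); rewrite /= ?mulr0 ?mul0r ?addr0 ?mulr1 ?add0r //; ring.
Qed.



Lemma commUT_t (F : fieldType) (x : nmat F) i q (a : F) p r : isUT x -> (i < q)%N ->
  commUT x (tUT i q a) p r =
  (p == r)%:R + a * (x p i * invUT x q r - (p == i)%:R * (r == q)%:R).
Proof.
move=> hx hiq.
have X2 : forall p' r', mulUT (mulUT x (tUT i q a)) (invUT x) p' r' =
    (p' == r')%:R + a * x p' i * invUT x q r'.
  move=> p' r'; rewrite (@mulE F (mulUT x (tUT i q a)) (invUT x) p' r' r'.+1 (invUT_UT x) (ltnSn r')).
  under eq_bigr => k _ do rewrite mul_t_r // mulrDl.
  rewrite big_split /=.
  have -> : \sum_(k < r'.+1) x p' k * invUT x k r' = mulUT x (invUT x) p' r' by [].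
  rewrite mulUTV //; congr (_ + _).
  rewrite -(sum_delta_UT q r' (invUT_UT x)) mulr_sumr; apply: eq_bigr => k _; ring.
rewrite /commUT inv_tUT // mul_t_r // !X2 (proj2 (invUT_UT x q i) hiq); ring.
Qed.

Lemma inv_row_triv (F : fieldType) (x : nmat F) q : isUT x ->
  (forall r, x q r = (q == r)%:R) -> forall r, invUT x q r = (q == r)%:R.
Proof.
move=> hx hq r; have := congr1 (fun M => M q r) (mulUTV hx).
rewrite /mulUT /eUT /=.
under eq_bigr => k _ do rewrite hq eq_sym.
rewrite sum_delta_UT //; exact: invUT_UT.
Qed.

Lemma commUT_t_triv (F : fieldType) (x : nmat F) i q (a : F) p r : isUT x -> (i < q)%N ->
  (forall r, x q r = (q == r)%:R) ->
  commUT x (tUT i q a) p r = (p == r)%:R + a * ((x p i - (p == i)%:R) * (r == q)%:R).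
Proof.
move=> hx hiq hq; rewrite commUT_t // inv_row_triv // [q == r]eq_sym; ring.
Qed.



Lemma rows_inv (F : fieldType) (A B : nmat F) : isUT A -> isUT B ->
  (forall p r, (0 < p)%N -> A p r = B p r) ->
  forall p r, (0 < p)%N -> invUT A p r = invUT B p r.
Proof.
move=> hA hB hAB.
set D := mulUT (invUT A) B.
have hD : isUT D by apply: mulUT_UT => //; exact: invUT_UT.
have hDrow : forall p, (0 < p)%N -> forall r, D p r = (p == r)%:R.
  move=> p hp r; have := congr1 (fun M => M p r) (mulVUT hA); rewrite /= /eUT => <-.
  rewrite /D /mulUT; apply: eq_bigr => k _; case: (ltnP k p) => hk.
    by rewrite (proj2 (invUT_UT A p k) hk) !mul0r.
  by rewrite (hAB k r (leq_trans hp hk)).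
have hinvB : invUT B = mulUT (invUT D) (invUT A).
  symmetry; apply: invUT_uniq => //.
    by apply: mulUT_UT; exact: invUT_UT.
  rewrite mulA_UT; [|exact: invUT_UT|exact: hB].
  by rewrite -/D mulVUT.
move=> p r hp; rewrite hinvB /mulUT.
under eq_bigr => k _ do rewrite (inv_row_triv hD (hDrow p hp)) eq_sym.
rewrite sum_delta_UT //; exact: invUT_UT.
Qed.



Lemma natF (F : fieldType) : ((false : nat)%:R : F) = 0. Proof. by []. Qed.
Lemma natT (F : fieldType) : ((true : nat)%:R : F) = 1. Proof. by []. Qed.

Lemma colz0 (F : fieldType) (x : nmat F) p : isUT x -> x p 0 = (p == 0)%:R.
Proof. by move=> hx; case: p => [|p]; [exact: (proj1 (hx 0 0)) | exact: (proj2 (hx p.+1 0))]. Qed.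

Lemma phi_e (F : fieldType) (phi : nmat F -> nmat F) :
  PCmap phi -> almost_identity phi -> phi (eUT F) = eUT F.
Proof.
case=> hUT _ _ hc ha.
have ht := tUT_UT (1 : F) (ltnSn 0).
by rewrite -(commUTxx ht) hc // ha.
Qed.

Lemma DC (F : fieldType) (x : nmat F) j k l : isUT x -> (0 < j)%N -> (j < k)%N -> (k < l)%N ->
  commUT (commUT x (tUT 0 j 1)) (tUT k l 1) = tUT 0 l (invUT x j k).
Proof.
move=> hx hj hjk hkl.
have hN : isUT (commUT x (tUT 0 j 1)) by apply: commUT_UT => //; exact: tUT_UT.
have hl : (0 < l)%N by lia.
apply: functional_extensionality => p; apply: functional_extensionality => r.
rewrite commUT_t_triv //; last first.
  move=> r'; rewrite commUT_t // colz0 // (gtn_eqF hl) natF; ring.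
rewrite commUT_t // colz0 // (gtn_eqF hjk) tUT_ent natF; ring.
Qed.

Lemma step1_inv (F : fieldType) (phi : nmat F -> nmat F) :
  PCmap phi -> almost_identity phi -> forall x, isUT x ->
  forall j k, (0 < j)%N -> invUT (phi x) j k = invUT x j k.
Proof.
move=> H ha; have [hUT _ _ hc] := H; move=> x hx j k hj.
case: (ltnP j k) => hjk; last first.
  case: (ltngtP j k) hjk => // hjk _.
    by rewrite (proj2 (invUT_UT _ j k) hjk) (proj2 (invUT_UT _ j k) hjk).
  by subst k; rewrite (proj1 (invUT_UT _ j j)) (proj1 (invUT_UT _ j j)).
have ht1 := tUT_UT (1 : F) hj; have ht2 := tUT_UT (1 : F) (ltnSn k).
have e1 := DC hx hj hjk (ltnSn k).
have e2 := DC (hUT x hx) hj hjk (ltnSn k).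
have : phi (commUT (commUT x (tUT 0 j 1)) (tUT k k.+1 1)) =
       commUT (commUT (phi x) (tUT 0 j 1)) (tUT k k.+1 1).
  rewrite hc //; last by apply: commUT_UT.
  by rewrite hc // !ha //; lia.
rewrite e1 e2 ha //.
move/(congr1 (fun M => M 0 k.+1)); rewrite !tUT_ent eqxx /= => h.
by move: h; rewrite !mulr1 => /addrI.
Qed.

Lemma step1 (F : fieldType) (phi : nmat F -> nmat F) :
  PCmap phi -> almost_identity phi -> forall x, isUT x ->
  forall p r, (0 < p)%N -> phi x p r = x p r.
Proof.
move=> H ha; have [hUT _ _ hc] := H; move=> x hx p r hp.
have := rows_inv (invUT_UT (phi x)) (invUT_UT x) (step1_inv H ha hx) r hp.
by rewrite !invUTK //; exact: hUT.
Qed.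

Lemma CL (F : fieldType) (phi : nmat F -> nmat F) :
  PCmap phi -> almost_identity phi -> forall x i q, isUT x -> (i < q)%N ->
  phi (commUT x (tUT i q 1)) = commUT x (tUT i q 1) -> forall p, phi x p i = x p i.
Proof.
move=> H ha; have [hUT _ _ hc] := H; move=> x i q hx hiq e p.
have : commUT (phi x) (tUT i q 1) = commUT x (tUT i q 1).
  by rewrite -e hc ?ha //; exact: tUT_UT.
move/(congr1 (fun M => M p q)); rewrite !commUT_t //; last exact: hUT.
rewrite !(proj1 (invUT_UT _ q q)) !mulr1 !mul1r => /addrI /addIr //.
Qed.



Definition cE (F : fieldType) (v : nat -> F) (n : nat) : nmat F :=
  fun p r => (p == r)%:R + v p * (r == n)%:R.

Lemma cE_UT (F : fieldType) (v : nat -> F) n :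
  (forall p, (n <= p)%N -> v p = 0) -> isUT (cE v n).
Proof.
move=> hv i j; rewrite /cE eqxx; split.
  by case: (i =P n) => [->|_]; rewrite ?natT ?natF ?mulr0 ?hv ?mul0r ?addr0.
move=> hji; rewrite (gtn_eqF hji) add0r.
case: (j =P n) => [jn|_]; last by rewrite mulr0.
by rewrite hv ?mul0r //; rewrite -jn ltnW.
Qed.

Lemma comm_triv_row (F : fieldType) (x : nmat F) i q (a : F) : isUT x -> (i < q)%N ->
  (forall r, x q r = (q == r)%:R) ->
  commUT x (tUT i q a) = cE (fun p => a * (x p i - (p == i)%:R)) q.
Proof.
move=> hx hiq hq; apply: functional_extensionality => p; apply: functional_extensionality => r.
rewrite commUT_t_triv // /cE; ring.
Qed.

Lemma col_triv_fixed (F : fieldType) (phi : nmat F -> nmat F) :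
  PCmap phi -> almost_identity phi -> forall x i q, isUT x -> (i < q)%N ->
  (forall p, x p i = (p == i)%:R) -> (forall r, x q r = (q == r)%:R) ->
  forall p, phi x p i = x p i.
Proof.
move=> H ha x i q hx hiq hcol hrow.
apply: (CL H ha hx hiq).
rewrite comm_triv_row //.
have -> : cE (fun p => 1 * (x p i - (p == i)%:R)) q = eUT F.
  apply: functional_extensionality => p; apply: functional_extensionality => r.
  by rewrite /cE hcol subrr mulr0 mul0r addr0.
exact: phi_e.
Qed.

Lemma ColForm (F : fieldType) (phi : nmat F -> nmat F) :
  PCmap phi -> almost_identity phi -> forall v n, (0 < n)%N ->
  (forall p, (n <= p)%N -> v p = 0) ->
  phi (cE v n) = cE (fun p => if p == 0%N then phi (cE v n) 0 n else v p) n.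
Proof.
move=> H ha v n hn hv; have [hUT _ _ hc] := H.
have hC := cE_UT hv.
apply: functional_extensionality => p; apply: functional_extensionality => r.
case: p => [|p]; last by rewrite (step1 H ha hC) // /cE.
rewrite [RHS]/cE /=.
case: (r =P n) => [->|rn]; first by rewrite (ltn_eqF hn) natT natF add0r mulr1.
rewrite natF mulr0 addr0.
case: r rn => [|r] rn; first by rewrite (proj1 (hUT _ hC 0 0)).
rewrite (col_triv_fixed H ha (q := (maxn r.+1 n).+1) hC) //.
- by rewrite /cE; case: (r.+1 =P n) rn => // _ _; rewrite natF mulr0 addr0.
- by rewrite ltnS leq_maxl.
- by move=> p; rewrite /cE; case: (r.+1 =P n) rn => // _ _; rewrite natF mulr0 addr0.
- move=> r'; rewrite /cE hv ?mul0r ?addr0 //.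
  by apply: ltnW; rewrite ltnS leq_maxr.
Qed.

Lemma reloc (F : fieldType) (phi : nmat F -> nmat F) :
  PCmap phi -> almost_identity phi -> forall v n r (a : F), (0 < n)%N -> (n < r)%N ->
  (forall p, (n <= p)%N -> v p = 0) ->
  phi (cE (fun p => a * v p) r) 0 r = a * phi (cE v n) 0 n.
Proof.
move=> H ha v n r a hn hnr hv; have [hUT _ _ hc] := H.
have hC := cE_UT hv.
have hrow : forall (w : nat -> F), (forall p, (n <= p)%N -> w p = 0) ->
    forall r', cE w n r r' = (r == r')%:R.
  by move=> w hw r'; rewrite /cE hw ?mul0r ?addr0 // ltnW.
have e : commUT (cE v n) (tUT n r a) = cE (fun p => a * v p) r.
  rewrite comm_triv_row //; last exact: hrow.
  congr cE; apply: functional_extensionality => p.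
  by rewrite /cE eqxx natT; ring.
rewrite -e hc //; last exact: tUT_UT.
rewrite ha // (ColForm H ha hn hv).
set w := (fun p => _).
have hw : forall p, (n <= p)%N -> w p = 0.
  move=> p hp; rewrite /w; case: (p =P 0%N) => [p0|_]; last exact: hv.
  by move: hp hn; rewrite p0; lia.
rewrite comm_triv_row //; first last.
- exact: hrow.
- exact: cE_UT.
rewrite /cE eqxx /= (ltn_eqF hn) (ltn_eqF (ltn_trans hn hnr)) /w /= eqxx natT; ring.
Qed.



Definition Xm (F : fieldType) (a b : nat -> F) (m : nat) : nmat F :=
  fun p r => (p == r)%:R + a p * (r == m)%:R + b p * (r == m.+1)%:R.

Lemma supp_delta (F : fieldType) (a : nat -> F) m c i :
  (forall p, (m <= p)%N -> a p = 0) -> (m <= c)%N -> a i * (i == c)%:R = 0.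
Proof.
move=> ha hc; case: (i =P c) => [->|_]; first by rewrite ha // mul0r.
by rewrite natF mulr0.
Qed.

Lemma Xm_UT (F : fieldType) (a b : nat -> F) m :
  (forall p, (m <= p)%N -> a p = 0) -> (forall p, (m <= p)%N -> b p = 0) -> isUT (Xm a b m).
Proof.
move=> ha hb i j; rewrite /Xm eqxx natT; split.
  by rewrite (supp_delta i ha (leqnn m)) (supp_delta i hb (leqnSn m)) !addr0.
move=> hji; rewrite (gtn_eqF hji) natF add0r.
have h1 : a i * (j == m)%:R = 0.
  case: (j =P m) => [jm|_]; last by rewrite natF mulr0.
  by rewrite ha ?mul0r // -jm ltnW.
have h2 : b i * (j == m.+1)%:R = 0.
  case: (j =P m.+1) => [jm|_]; last by rewrite natF mulr0.
  by rewrite hb ?mul0r //; move: hji; rewrite jm; lia.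
by rewrite h1 h2 addr0.
Qed.

Lemma mul_cE_l (F : fieldType) (v : nat -> F) n (B : nmat F) p r : isUT B ->
  mulUT (cE v n) B p r = B p r + v p * B n r.
Proof.
move=> hB; rewrite /mulUT /cE.
under eq_bigr => k _ do rewrite mulrDl eq_sym.
rewrite big_split /= sum_delta_UT //; congr (_ + _).
rewrite -(sum_delta_UT n r hB) mulr_sumr; apply: eq_bigr => k _; ring.
Qed.

Lemma mul_Xm_l (F : fieldType) (a b : nat -> F) m (B : nmat F) p r : isUT B ->
  mulUT (Xm a b m) B p r = B p r + a p * B m r + b p * B m.+1 r.
Proof.
move=> hB; rewrite /mulUT /Xm.
under eq_bigr => k _ do rewrite !mulrDl eq_sym.
rewrite !big_split /= sum_delta_UT //; congr (_ + _ + _).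
  rewrite -(sum_delta_UT m r hB) mulr_sumr; apply: eq_bigr => k _; ring.
rewrite -(sum_delta_UT m.+1 r hB) mulr_sumr; apply: eq_bigr => k _; ring.
Qed.

Lemma inv_cE (F : fieldType) (v : nat -> F) n : (forall p, (n <= p)%N -> v p = 0) ->
  invUT (cE v n) = cE (fun p => - v p) n.
Proof.
move=> hv; symmetry; apply: invUT_uniq; try apply: cE_UT => //.
  by move=> p hp; rewrite hv ?oppr0.
apply: functional_extensionality => p; apply: functional_extensionality => r.
rewrite mul_cE_l; last exact: cE_UT.
rewrite /cE /eUT (hv n (leqnn n)) [n == r]eq_sym; ring.
Qed.

Lemma inv_Xm (F : fieldType) (a b : nat -> F) m :
  (forall p, (m <= p)%N -> a p = 0) -> (forall p, (m <= p)%N -> b p = 0) ->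
  invUT (Xm a b m) = Xm (fun p => - a p) (fun p => - b p) m.
Proof.
move=> ha hb; symmetry; apply: invUT_uniq; try apply: Xm_UT => //.
- by move=> p hp; rewrite ha ?oppr0.
- by move=> p hp; rewrite hb ?oppr0.
apply: functional_extensionality => p; apply: functional_extensionality => r.
rewrite mul_Xm_l; last exact: Xm_UT.
rewrite /Xm /eUT (ha m (leqnn m)) (ha m.+1 (leqnSn m)) (hb m (leqnn m)) (hb m.+1 (leqnSn m)) [m == r]eq_sym [m.+1 == r]eq_sym; ring.
Qed.

Lemma Lcomm (F : fieldType) (u a b : nat -> F) m :
  (forall p, (m.+2 <= p)%N -> u p = 0) -> u m = -1 -> u m.+1 = -1 ->
  (forall p, (m <= p)%N -> a p = 0) -> (forall p, (m <= p)%N -> b p = 0) ->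
  commUT (cE u m.+2) (Xm a b m) = cE (fun p => a p + b p) m.+2.
Proof.
move=> hu um um1 ha hb.
have hW := cE_UT hu; have hX := Xm_UT ha hb.
have hWi : isUT (cE (fun p => - u p) m.+2).
  by apply: cE_UT => p hp; rewrite hu ?oppr0.
have hXi : isUT (Xm (fun p => - a p) (fun p => - b p) m).
  by apply: Xm_UT => p hp; rewrite ?ha ?hb ?oppr0.
have hWX : isUT (mulUT (cE (fun p => - u p) m.+2) (Xm (fun p => - a p) (fun p => - b p) m)).
  exact: mulUT_UT.
rewrite /commUT inv_cE // inv_Xm // mulA_UT // mulA_UT //.
apply: functional_extensionality => p; apply: functional_extensionality => r.
rewrite mul_cE_l; last exact: mulUT_UT.
rewrite !mul_Xm_l // !mul_cE_l // /Xm /cE.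
have h1 : (m <= m.+1)%N by [].
have h2 : (m <= m.+2)%N by lia.
rewrite (ha m (leqnn m)) (ha m.+1 h1) (ha m.+2 h2) (hb m (leqnn m)) (hb m.+1 h1) (hb m.+2 h2).
rewrite um um1 (hu m.+2 (leqnn _)) [m == r]eq_sym [m.+1 == r]eq_sym [m.+2 == r]eq_sym.
ring.
Qed.



Lemma col_via (F : fieldType) (phi : nmat F -> nmat F) :
  PCmap phi -> almost_identity phi -> forall x i q, isUT x -> (0 < i)%N -> (i < q)%N ->
  (forall r, x q r = (q == r)%:R) ->
  phi x 0 i = phi (cE (fun p => x p i - (p == i)%:R) q) 0 q.
Proof.
move=> H ha x i q hx hi hiq hrow; have [hUT _ _ hc] := H.
have e : commUT x (tUT i q 1) = cE (fun p => x p i - (p == i)%:R) q.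
  rewrite comm_triv_row //; congr cE; apply: functional_extensionality => p; ring.
rewrite -e hc ?ha //; last exact: tUT_UT.
rewrite commUT_t_triv //; first last.
- by move=> r; rewrite (step1 H ha hx) // (leq_trans hi (ltnW hiq)).
- exact: hUT.
rewrite (ltn_eqF hi) (ltn_eqF (ltn_trans hi hiq)) eqxx natT natF; ring.
Qed.

Lemma phiX (F : fieldType) (phi : nmat F -> nmat F) :
  PCmap phi -> almost_identity phi -> forall a b m, (0 < m)%N ->
  (forall p, (m <= p)%N -> a p = 0) -> (forall p, (m <= p)%N -> b p = 0) ->
  phi (Xm a b m) = Xm (fun p => if p == 0%N then phi (cE a m.+2) 0 m.+2 else a p)
                      (fun p => if p == 0%N then phi (cE b m.+2) 0 m.+2 else b p) m.
Proof.
move=> H ha a b m hm hav hbv; have [hUT _ _ hc] := H.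
have hX := Xm_UT hav hbv.
have hrow : forall q, (m.+1 < q)%N -> forall r, Xm a b m q r = (q == r)%:R.
  move=> q hq r; rewrite /Xm hav ?hbv ?mul0r ?addr0 //; lia.
apply: functional_extensionality => p; apply: functional_extensionality => r.
case: p => [|p]; last by rewrite (step1 H ha hX) // /Xm.
rewrite [RHS]/Xm /=.
case: (r =P m) => [->|rm].
  rewrite natT mulr1 (_ : (m == m.+1) = false) ?natF ?mulr0 ?addr0; last by lia.
  rewrite (ltn_eqF hm) natF add0r.
  rewrite (col_via H ha (q := m.+2) hX hm) //; last exact: hrow.
  have -> : (fun p => Xm a b m p m - (p == m)%:R) = a => //.
  apply: functional_extensionality => p.
  rewrite /Xm eqxx natT (_ : (m == m.+1) = false) ?natF; last by lia.
  ring.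
case: (r =P m.+1) => [->|rm1].
  rewrite natT mulr1 natF mulr0 addr0 /= add0r.
  rewrite (col_via H ha (q := m.+2) hX (ltn0Sn m)) //; last exact: hrow.
  have -> : (fun p => Xm a b m p m.+1 - (p == m.+1)%:R) = b => //.
  apply: functional_extensionality => p.
  rewrite /Xm eqxx natT (_ : (m.+1 == m) = false) ?natF; last by lia.
  ring.
rewrite natF !mulr0 !addr0.
case: r rm rm1 => [|r] rm rm1; first by rewrite (proj1 (hUT _ hX 0 0)).
rewrite (col_triv_fixed H ha (q := (maxn r.+1 m.+1).+1) hX) //.
- rewrite /Xm; case: (r.+1 =P m) rm => // _ _; case: (r.+1 =P m.+1) rm1 => // _ _.
  by rewrite natF !mulr0 !addr0.
- by rewrite ltnS leq_maxl.
- move=> p; rewrite /Xm; case: (r.+1 =P m) rm => // _ _; case: (r.+1 =P m.+1) rm1 => // _ _.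
  by rewrite natF !mulr0 !addr0.
- apply: hrow; rewrite ltnS; exact: leq_maxr.
Qed.



Lemma ifsupp (F : fieldType) (v : nat -> F) (g : F) k :
  (0 < k)%N -> (forall p, (k <= p)%N -> v p = 0) ->
  forall p, (k <= p)%N -> (if p == 0%N then g else v p) = 0.
Proof.
move=> hk hv p hp; case: (p =P 0%N) => [p0|_]; last exact: hv.
by move: hp hk; rewrite p0; lia.
Qed.

Lemma addg (F : fieldType) (phi : nmat F -> nmat F) :
  PCmap phi -> almost_identity phi -> forall a b m, (0 < m)%N ->
  (forall p, (m <= p)%N -> a p = 0) -> (forall p, (m <= p)%N -> b p = 0) ->
  phi (cE (fun p => a p + b p) m.+2) 0 m.+2 =
  phi (cE a m.+2) 0 m.+2 + phi (cE b m.+2) 0 m.+2.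
Proof.
move=> H ha a b m hm hav hbv; have [hUT _ _ hc] := H.
pose u := fun p => - (((p == m)%:R : F) + (p == m.+1)%:R).
have hu : forall p, (m.+2 <= p)%N -> u p = 0.
  move=> p hp; have h1 : (p == m) = false by apply/eqP; lia.
  have h2 : (p == m.+1) = false by apply/eqP; lia.
  by rewrite /u h1 h2 natF addr0 oppr0.
have um : u m = -1.
  have h2 : (m == m.+1) = false by apply/eqP; lia.
  by rewrite /u eqxx h2 natF natT addr0.
have um1 : u m.+1 = -1.
  have h2 : (m.+1 == m) = false by apply/eqP; lia.
  by rewrite /u eqxx h2 natF natT add0r.
have e := Lcomm hu um um1 hav hbv.
rewrite -e hc; [|exact: cE_UT|exact: Xm_UT].
rewrite (ColForm H ha (ltn0Sn m.+1) hu) (phiX H ha hm hav hbv).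
set g := phi (cE u m.+2) 0 m.+2.
have um' : (if m == 0%N then g else u m) = -1 by rewrite (gtn_eqF hm).
have um1' : (if m.+1 == 0%N then g else u m.+1) = -1 by [].
rewrite (Lcomm (ifsupp g (ltn0Sn m.+1) hu) um' um1' (ifsupp _ hm hav) (ifsupp _ hm hbv)).
rewrite /cE (_ : (0%N == m.+2) = false) // natF add0r eqxx natT mulr1 //.
Qed.



Lemma ginv1 (F : fieldType) (phi : nmat F -> nmat F) :
  PCmap phi -> almost_identity phi -> forall v n r, (0 < n)%N -> (n < r)%N ->
  (forall p, (n <= p)%N -> v p = 0) ->
  phi (cE v r) 0 r = phi (cE v n) 0 n.
Proof.
move=> H ha v n r hn hnr hv.
have := reloc H ha (1 : F) hn hnr hv.
have -> : (fun p => 1 * v p) = v by apply: functional_extensionality => p; rewrite mul1r.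
by rewrite mul1r.
Qed.

Lemma ginv (F : fieldType) (phi : nmat F -> nmat F) :
  PCmap phi -> almost_identity phi -> forall v n n', (0 < n)%N -> (0 < n')%N ->
  (forall p, (n <= p)%N -> v p = 0) -> (forall p, (n' <= p)%N -> v p = 0) ->
  phi (cE v n) 0 n = phi (cE v n') 0 n'.
Proof.
move=> H ha v n n' hn hn' hv hv'.
rewrite -(ginv1 H ha (r := (maxn n n').+1) hn _ hv); last by rewrite ltnS leq_maxl.
by rewrite (ginv1 H ha (r := (maxn n n').+1) hn' _ hv') // ltnS leq_maxr.
Qed.

Lemma gval (F : fieldType) (phi : nmat F -> nmat F) :
  PCmap phi -> almost_identity phi -> forall m v, (forall p, (m <= p)%N -> v p = 0) ->
  forall n, (m < n)%N -> phi (cE v n) 0 n = v 0%N.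
Proof.
move=> H ha; elim=> [|m IH] v hv n hn.
  have -> : cE v n = eUT F.
    apply: functional_extensionality => p; apply: functional_extensionality => r.
    by rewrite /cE /eUT hv // mul0r addr0.
  by rewrite (phi_e H ha) /eUT (ltn_eqF hn) hv.
have hvn : forall p, (n <= p)%N -> v p = 0 by move=> p hp; apply: hv; lia.
rewrite (ginv H ha (n' := m.+3) (ltn_trans (ltn0Sn m) hn) _ hvn); last 2 first.
- by [].
- by move=> p hp; apply: hv; lia.
pose v1 := fun p => if (p < m)%N then v p else 0.
pose w := fun p => v m * ((p == m)%:R : F).
have ev : v = (fun p => v1 p + w p).
  apply: functional_extensionality => p; rewrite /v1 /w.
  case: (ltngtP p m) => hpm.
  - by rewrite ?(ltn_eqF hpm) ?natF ?mulr0 ?addr0.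
  - by rewrite ?(gtn_eqF hpm) ?natF ?mulr0 ?addr0 hv.
  - by rewrite ?hpm ?ltnn ?eqxx ?natT ?mulr1 ?add0r.
have hv1 : forall p, (m <= p)%N -> v1 p = 0.
  by move=> p hp; rewrite /v1 ltnNge hp.
have hw : forall p, (m.+1 <= p)%N -> w p = 0.
  by move=> p hp; rewrite /w (_ : (p == m) = false) ?natF ?mulr0 //; apply/eqP; lia.
have hv1' : forall p, (m.+1 <= p)%N -> v1 p = 0 by move=> p hp; apply: hv1; lia.
have hlt : (m < m.+3)%N by lia.
rewrite ev (addg H ha (ltn0Sn m) hv1' hw) (IH v1 hv1 m.+3 hlt).
have -> : cE w m.+3 = tUT m m.+3 (v m).
  apply: functional_extensionality => p; apply: functional_extensionality => r.
  by rewrite /cE tUT_ent /w; ring.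
rewrite (ha _ _ _ hlt) tUT_ent (_ : (0%N == m.+3) = false) // natF add0r eqxx natT mulr1 /w.
by [].
Qed.

Lemma colfix (F : fieldType) (phi : nmat F -> nmat F) :
  PCmap phi -> almost_identity phi -> forall v n, (0 < n)%N ->
  (forall p, (n <= p)%N -> v p = 0) -> phi (cE v n) = cE v n.
Proof.
move=> H ha v n hn hv; rewrite (ColForm H ha hn hv).
congr cE; apply: functional_extensionality => p.
case: (p =P 0%N) => [->|] //.
rewrite (ginv H ha (n' := n.+1) hn (ltn0Sn n) hv) //; last first.
  by move=> q hq; apply: hv; lia.
apply: (gval H ha (m := n)) => //.
Qed.

Lemma Nkfix (F : fieldType) (phi : nmat F -> nmat F) :
  PCmap phi -> almost_identity phi -> forall x k, isUT x ->
  (forall p r, (k <= p)%N -> x p r = (p == r)%:R) -> phi x = x.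
Proof.
move=> H ha x k hx hk; have [hUT _ _ hc] := H.
apply: functional_extensionality => p; apply: functional_extensionality => r.
case: r => [|r]; first by rewrite (colz0 p (hUT x hx)) (colz0 p hx).
have hq : (r.+1 < (maxn r.+1 k).+1)%N by rewrite ltnS leq_maxl.
apply: (CL H ha hx hq).
rewrite comm_triv_row //; last by move=> r'; apply: hk; apply: ltnW; rewrite ltnS leq_maxr.
apply: colfix => // p' hp'.
rewrite (proj2 (hx p' r.+1)); last exact: leq_trans hq hp'.
by rewrite (_ : (p' == r.+1) = false) ?natF ?subrr ?mulr0 //; apply/eqP; lia.
Qed.

Theorem mainTheorem6 (F : fieldType) (phi : nmat F -> nmat F) :
  PCmap phi -> almost_identity phi -> forall x : nmat F, isUT x -> phi x = x.
Proof.
move=> H ha x hx; have [hUT _ _ hc] := H.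
apply: functional_extensionality => p; apply: functional_extensionality => r.
case: r => [|r]; first by rewrite (colz0 p (hUT x hx)) (colz0 p hx).
apply: (CL H ha hx (ltnSn r.+1)).
apply: (Nkfix H ha (k := r.+2)); first by apply: commUT_UT => //; exact: tUT_UT.
move=> p' r' hp'.
rewrite commUT_t // (proj2 (hx p' r.+1)) //.
by rewrite (_ : (p' == r.+1) = false) ?natF ?mul0r ?subrr ?mulr0 ?addr0 //; apply/eqP; lia.
Qed.
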